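(* Assume the WLPR scheme $S_{d,\mathbf{w}^\lambda}$ is well defined, with mask $\mathbf{a}=(a_m)_{m\in\mathbb{Z}}$. Then $S_{d,\mathbf{w}^\lambda}$ is odd-symmetric: $a_m=a_{-m}$ for all $m\in\mathbb{Z}$.
   Context: Let $\phi:[0,1]\to[0,1]$ be non-increasing with $\phi(0)=1$, $\omega(x)=\phi(|x|)$ for $|x|\le1$ and $0$ otherwise, $\lambda\in(0,\infty)\setminus\mathbb{N}$, and $w^\lambda_m=\omega(m/\lambda)$, $m\in\mathbb{Z}$. Let $d\ge0$ be an integer and $\Pi_d$ the real polynomials of degree at most $d$. For $i\in\{0,1\}$ let $M_i=\{m\in\mathbb{Z}: m\equiv i\pmod 2,\ |m|<\lambda\}$. The weighted local polynomial regression scheme $S_{d,\mathbf{w}^\lambda}$ maps a real sequence $\mathbf{f}=(f_j)_{j\in\mathbb{Z}}$ to $(S\mathbf{f})_{2j+i}=\hat p(0)$ ($i\in\{0,1\}$, $j\in\mathbb{Z}$), where $\hat p$ minimizes $\sum_{m\in M_i} w^\lambda_m(f_{j+(m+i)/2}-p(m))^2$ over $p\in\Pi_d$; ''well defined'' means $\hat p(0)$ does not depend on the choice of minimizer. The scheme is then linear, $(S\mathbf{f})_{2j+i}=\sum_{m\in M_i}a_m f_{j+(m+i)/2}$, and its mask is $\mathbf{a}=(a_m)_{m\in\mathbb{Z}}$ with $a_m=0$ for $|m|\ge\lambda$. *)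

(* Defs.v *)
From mathcomp Require Import all_boot all_order all_algebra.
From mathcomp Require Import reals.
Set Implicit Arguments. Unset Strict Implicit. Unset Printing Implicit Defensive.
Import Order.TTheory GRing.Theory Num.Theory.
Local Open Scope ring_scope.

Section WLPR.
Variable R : realType.

Definition omega (phi : R -> R) (x : R) : R :=
  if `|x| <= 1 then phi `|x| else 0.

Definition wgt (phi : R -> R) (lambda : R) (m : int) : R :=
  omega phi (m%:~R / lambda).

(* M_i = { m in Z : m = i mod 2, |m| < lambda }, listed explicitly as a
   finite sequence (every such m satisfies |m| <= trunc lambda). *)
Definition Mset (lambda : R) (i : bool) : seq int :=
  let N := Num.truncn lambda in
  [seq m <- [seq (k%:Z - N%:Z)%R | k <- iota 0 (N.*2.+1)]
     | (modz m 2 == (i : nat)%:Z) && ((`|m|%:~R : R) < lambda)].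

(* weighted least squares objective for output index 2j+i *)
Definition wlpr_obj (phi : R -> R) (lambda : R) (i : bool) (j : int)
  (f : int -> R) (p : {poly R}) : R :=
  \sum_(m <- Mset lambda i)
     wgt phi lambda m * (f (j + divz (m + (i : nat)%:Z) 2) - p.[m%:~R]) ^+ 2.

Definition wlpr_minimizer (d : nat) (phi : R -> R) (lambda : R) (i : bool)
  (j : int) (f : int -> R) (p : {poly R}) : Prop :=
  (size p <= d.+1)%N /\
  forall q : {poly R}, (size q <= d.+1)%N ->
    wlpr_obj phi lambda i j f p <= wlpr_obj phi lambda i j f q.

Definition wlpr_well_defined (d : nat) (phi : R -> R) (lambda : R) : Prop :=
  forall (i : bool) (j : int) (f : int -> R) (p q : {poly R}),
    wlpr_minimizer d phi lambda i j f p ->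
    wlpr_minimizer d phi lambda i j f q -> p.[0] = q.[0].

(* a is the mask of the scheme:
   (S f)_{2j+i} = sum_{m in M_i} a_m f_{j+(m+i)/2}, and a_m = 0 for |m| >= lambda *)
Definition wlpr_mask (d : nat) (phi : R -> R) (lambda : R) (a : int -> R) : Prop :=
  (forall m : int, lambda <= `|m|%:~R -> a m = 0) /\
  forall (i : bool) (j : int) (f : int -> R) (p : {poly R}),
    wlpr_minimizer d phi lambda i j f p ->
    p.[0] = \sum_(m <- Mset lambda i) a m * f (j + divz (m + (i : nat)%:Z) 2).

End WLPR.

(* Main.v *)
Require Import Defs.
From mathcomp Require Import all_boot all_order all_algebra zify ring lra.
From mathcomp Require Import reals.
Import Order.TTheory GRing.Theory Num.Theory.
Import Order.TTheory GRing.Theory Num.Theory.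
Local Open Scope ring_scope.

Lemma sum_ge0_eq0 (R : realType) (s : seq int) (F : int -> R) : (forall m, m \in s -> 0 <= F m) ->
  \sum_(m <- s) F m = 0 -> forall m, m \in s -> F m = 0.
Proof.
elim: s => [|x s' IH] //= hF.
rewrite big_cons => /eqP; rewrite paddr_eq0; last 2 first.
- by apply: hF; rewrite inE eqxx.
- by rewrite big_seq; apply: sumr_ge0 => m hm; apply: hF; rewrite inE hm orbT.
case/andP => /eqP h1 /eqP h2 m; rewrite inE => /orP [/eqP -> //|hm].
by apply: IH => // m' hm'; apply: hF; rewrite inE hm' orbT.
Qed.

Lemma split_poly (R : realType) (k : nat) (q e : {poly R}) : (size q <= k.+1)%N -> (size e <= k)%N ->
  (size (q - q`_k *: ('X^k - e))%R <= k)%N.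
Proof.
move=> hq he.
have hs : (size (q - q`_k *: ('X^k - e))%R <= k.+1)%N.
  apply: leq_trans (size_polyD _ _) _; rewrite geq_max hq /= size_polyN.
  apply: leq_trans (size_scale_leq _ _) _.
  apply: leq_trans (size_polyD _ _) _; rewrite geq_max size_polyXn leqnn /=.
  by rewrite size_polyN; apply: leq_trans he _.
have hc : (q - q`_k *: ('X^k - e))`_k = 0.
  rewrite coefB coefZ coefB coefXn eqxx.
  by rewrite (nth_default 0 he) /= subr0 mulr1 subrr.
move: hs; rewrite leq_eqVlt ltnS => /orP [/eqP hs|//].
exfalso; have : lead_coef (q - q`_k *: ('X^k - e)) != 0.
  by rewrite lead_coef_eq0 -size_poly_eq0 hs.
by rewrite lead_coefE hs /= hc eqxx.
Qed.

Section Gen.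
Variable R : realType.
Variables (s : seq int) (w : int -> R).
Hypothesis w_ge0 : forall m, m \in s -> 0 <= w m.

Lemma exist_orth k : forall H : int -> R, exists p : {poly R},
  (size p <= k)%N /\ forall q : {poly R}, (size q <= k)%N ->
  \sum_(m <- s) w m * (H m - p.[m%:~R]) * q.[m%:~R] = 0.
Proof.
elim: k => [|k IH] H.
  exists 0; split; first by rewrite size_poly0.
  move=> q; rewrite leqn0 size_poly_eq0 => /eqP ->.
  by apply: big1 => m _; rewrite hornerE mulr0.
have [p [hp orp]] := IH H.
have [e [he ore]] := IH (fun m => (m%:~R : R) ^+ k).
set S : {poly R} := 'X^k - e.
have hS : forall x, S.[x] = x ^+ k - e.[x] by move=> x; rewrite /S !hornerE.
have oreS : forall q : {poly R}, (size q <= k)%N ->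
    \sum_(m <- s) w m * S.[m%:~R] * q.[m%:~R] = 0.
  by move=> q hq; rewrite -[RHS](ore q hq); apply: eq_bigr => m _; rewrite hS.
set rs := \sum_(m <- s) w m * (H m - p.[m%:~R]) * S.[m%:~R].
set ss := \sum_(m <- s) w m * S.[m%:~R] * S.[m%:~R].
have key : rs - rs / ss * ss = 0.
  have [ss0|nz] := eqVneq ss 0; last by rewrite mulfVK // subrr.
  rewrite ss0 mulr0 subr0 /rs big_seq big1 // => m hm.
  have h0 : forall m, m \in s -> 0 <= w m * S.[m%:~R] * S.[m%:~R].
    by move=> m' hm'; rewrite -mulrA mulr_ge0 ?w_ge0 // -expr2 sqr_ge0.
  have := @sum_ge0_eq0 R s _ h0 ss0 m hm.
  move/eqP; rewrite mulf_eq0 => /orP [/eqP h|/eqP h].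
    by rewrite mulrAC h mul0r.
  by rewrite h mulr0.
set t := rs / ss.
exists (p + t *: S); split.
  apply: leq_trans (size_polyD _ _) _; rewrite geq_max (leq_trans hp) //=.
  apply: leq_trans (size_scale_leq _ _) _.
  apply: leq_trans (size_polyD _ _) _; rewrite geq_max size_polyXn leqnn /=.
  by rewrite size_polyN; apply: leq_trans he _.
move=> q hq.
set c := q`_k.
set q' := q - c *: S.
have hq' : (size q' <= k)%N by apply: split_poly.
have qE : q = q' + c *: S by rewrite /q' subrK.
rewrite qE.
have -> : \sum_(m <- s) w m * (H m - (p + t *: S).[m%:~R]) * (q' + c *: S).[m%:~R]
   = \sum_(m <- s) w m * (H m - p.[m%:~R]) * q'.[m%:~R]
     - t * \sum_(m <- s) w m * S.[m%:~R] * q'.[m%:~R]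
     + c * (rs - t * ss).
  rewrite (eq_bigr (fun m => w m * (H m - p.[m%:~R]) * q'.[m%:~R]
     - t * (w m * S.[m%:~R] * q'.[m%:~R])
     + c * (w m * (H m - p.[m%:~R]) * S.[m%:~R] - t * (w m * S.[m%:~R] * S.[m%:~R]))));
    last by move=> m _; rewrite !(hornerD, hornerZ); ring.
  by rewrite big_split /= sumrB -!mulr_sumr sumrB -mulr_sumr.
by rewrite orp // oreS // mulr0 subr0 add0r /t key mulr0.
Qed.

Lemma orth_min (H : int -> R) (d : nat) (p : {poly R}) :
  (size p <= d)%N ->
  (forall q : {poly R}, (size q <= d)%N ->
    \sum_(m <- s) w m * (H m - p.[m%:~R]) * q.[m%:~R] = 0) ->
  forall q : {poly R}, (size q <= d)%N ->
  \sum_(m <- s) w m * (H m - p.[m%:~R]) ^+ 2 <=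
  \sum_(m <- s) w m * (H m - q.[m%:~R]) ^+ 2.
Proof.
move=> hp orp q hq.
have hpq : (size (p - q)%R <= d)%N.
  by apply: leq_trans (size_polyD _ _) _; rewrite geq_max hp size_polyN hq.
have -> : \sum_(m <- s) w m * (H m - q.[m%:~R]) ^+ 2 =
  \sum_(m <- s) w m * (H m - p.[m%:~R]) ^+ 2
  + 2 * \sum_(m <- s) w m * (H m - p.[m%:~R]) * (p - q).[m%:~R]
  + \sum_(m <- s) w m * ((p - q).[m%:~R]) ^+ 2.
  rewrite (eq_bigr (fun m => w m * (H m - p.[m%:~R]) ^+ 2
     + 2 * (w m * (H m - p.[m%:~R]) * (p - q).[m%:~R])
     + w m * ((p - q).[m%:~R]) ^+ 2));
    last by move=> m _; rewrite !(hornerD, hornerN); ring.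
  by rewrite !big_split /= -mulr_sumr.
rewrite orp // mulr0 addr0 lerDl big_seq sumr_ge0 // => m hm.
by rewrite mulr_ge0 ?w_ge0 // sqr_ge0.
Qed.
End Gen.

Lemma Mset_mem (R : realType) (lambda : R) (i : bool) (m : int) : 0 < lambda ->
  (m \in Mset lambda i) = (modz m 2 == (i:nat)%:Z) && ((`|m|%:~R : R) < lambda).
Proof.
move=> lp; rewrite /Mset mem_filter.
apply: andb_idr => /andP [h1 h2]; apply/mapP.
set N := Num.truncn lambda.
have hN : (absz m <= N)%N.
  rewrite truncn_ge_nat ?ltW //; apply: ltW; move: h2.
exists (absz (m + N%:Z)); first by rewrite mem_iota; lia.
lia.
Qed.

Lemma Mset_uniq (R : realType) (lambda : R) (i : bool) : uniq (Mset lambda i).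
Proof.
rewrite /Mset filter_uniq // map_inj_uniq ?iota_uniq // => x y; lia.
Qed.

Lemma Mset_refl (R : realType) (lambda : R) (i : bool) (F : int -> R) : 0 < lambda ->
  \sum_(m <- Mset lambda i) F m = \sum_(m <- Mset lambda i) F (- m).
Proof.
move=> lp; rewrite -(big_map (fun m => - m) xpredT F).
apply: perm_big; apply: uniq_perm; rewrite ?Mset_uniq ?map_inj_uniq ?Mset_uniq //.
  exact: oppr_inj.
move=> x; rewrite -{2}(opprK x) (mem_map oppr_inj) !Mset_mem // normrN.
have -> : modz (- x) 2 = modz x 2 by lia.
by [].
Qed.

Theorem lemma3p5 (R : realType) (phi : R -> R) (lambda : R) (d : nat)
  (phi_range : forall x : R, 0 <= x <= 1 -> 0 <= phi x <= 1)
  (phi_noninc : forall x y : R, 0 <= x -> x <= y -> y <= 1 -> phi y <= phi x)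
  (phi0 : phi 0 = 1)
  (lambda_pos : 0 < lambda)
  (lambda_notnat : forall n : nat, lambda != n%:R)
  (wd : wlpr_well_defined d phi lambda)
  (a : int -> R) (amask : wlpr_mask d phi lambda a) :
  forall m : int, a m = a (- m).
Proof.
move=> m0; have [amzero amrep] := amask.
have [hl|hl] := lerP lambda (`|m0|%:~R).
  by rewrite !amzero // normrN.
set i : bool := modz m0 2 != 0.
have hi : modz m0 2 = (i:nat)%:Z.
  by rewrite /i; case: eqP => /= h; lia.
set M := Mset lambda i.
have hM : forall m, m \in M -> modz m 2 = (i:nat)%:Z.
  by move=> m; rewrite Mset_mem // => /andP [/eqP -> _].
have hM' : forall m, m \in M -> - m \in M.
  by move=> m; rewrite !Mset_mem // normrN => /andP [/eqP h ->]; rewrite andbT; apply/eqP; lia.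
have m0M : m0 \in M by rewrite Mset_mem // hi eqxx hl.
set w := wgt phi lambda.
have w_ge0 : forall m, m \in M -> 0 <= w m.
  move=> m _; rewrite /w /wgt /omega; case: ifP => // h.
  by have /andP [] := phi_range (`|m%:~R / lambda|) (introT andP (conj (normr_ge0 _) h)).
have wN : forall m, w (- m) = w m.
  by move=> m; rewrite /w /wgt /omega mulrNz mulNr normrN.
set g : int -> R := fun m => if m == m0 then 1 else 0.
set f : int -> R := fun n => g (2 * n - (i:nat)%:Z).
set f2 : int -> R := fun n => g (- (2 * n - (i:nat)%:Z)).
set H : int -> R := fun m => f (0 + divz (m + (i:nat)%:Z) 2).
set H2 : int -> R := fun m => f2 (0 + divz (m + (i:nat)%:Z) 2).
have HE : forall m, m \in M -> H m = g m.
  move=> m /hM hm; rewrite /H /f; congr g; case: (i) hm => /= hm; lia.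
have H2E : forall m, m \in M -> H2 m = g (- m).
  move=> m /hM hm; rewrite /H2 /f2; congr g; congr (- _); case: (i) hm => /= hm; lia.
have [p [hp orp]] := @exist_orth R M w w_ge0 d.+1 H.
have pmin : wlpr_minimizer d phi lambda i 0 f p.
  by split => // q hq; exact: (@orth_min R M w w_ge0 H d.+1 p hp orp q hq).
have := amrep i 0 f p pmin.
rewrite (eq_big_seq (fun m => a m * g m)); last first.
  by move=> m hm; rewrite -HE.
rewrite (bigD1_seq m0) //= ?Mset_uniq // /g eqxx mulr1 big1 ?addr0; last first.
  by move=> m /negbTE ->; rewrite mulr0.
move=> pa.
set q := p \Po (- 'X).
have qE : forall x, q.[x] = p.[- x].
  by move=> x; rewrite /q horner_comp !hornerE.
have hq : (size q <= d.+1)%N.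
  apply: leq_trans (size_comp_poly_leq _ _) _.
  rewrite size_polyN size_polyX muln1; move: hp; case: (size p) => //.
have orq : forall h : {poly R}, (size h <= d.+1)%N ->
    \sum_(m <- M) w m * (H2 m - q.[m%:~R]) * h.[m%:~R] = 0.
  move=> h hh.
  have hh' : (size (h \Po (- 'X)) <= d.+1)%N.
    apply: leq_trans (size_comp_poly_leq _ _) _.
    rewrite size_polyN size_polyX muln1; move: hh; case: (size h) => //.
  rewrite -[RHS](orp _ hh') Mset_refl //.
  apply: eq_big_seq => m hm.
  rewrite wN H2E ?hM' // opprK -HE // qE horner_comp !hornerE.
  by rewrite !mulrNz opprK.
have qmin : wlpr_minimizer d phi lambda i 0 f2 q.
  by split => // q' hq'; exact: (@orth_min R M w w_ge0 H2 d.+1 q hq orq q' hq').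
have := amrep i 0 f2 q qmin.
rewrite (eq_big_seq (fun m => a m * g (- m))); last first.
  by move=> m hm; rewrite -H2E.
rewrite (bigD1_seq (- m0)) ?hM' //= ?Mset_uniq // /g opprK eqxx mulr1 big1 ?addr0; last first.
  move=> m hm; case: eqP => [h|]; last by rewrite mulr0.
  by move: hm; rewrite -h opprK eqxx.
by move=> qa; rewrite -pa -qa qE oppr0.
Qed.
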